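(* For integers $n\ge 1$ and $i\ge 0$, let $S_n(i):=\sum_{j=0}^{n} \frac{q^{ij}(q;q)_{n+j}}{(q^2;q^2)_j}$ (and similarly $S_{n-1}(i)$). Then \[ S_n(i)=S_{n-1}(i)-q^n S_{n-1}(i+1)+q^{in}(q;q^2)_n . \]
   Context: For integers $m,i\ge0$, $S_m(i):=\sum_{j=0}^{m} \frac{q^{ij}(q;q)_{m+j}}{(q^2;q^2)_j}$, a rational function of $q$. Here $(a;q)_0:=1$ and $(a;q)_n:=(1-a)(1-aq)\cdots(1-aq^{n-1})$ for $n\ge1$. *)

(* Defs.v *)
From HB Require Import structures.
From mathcomp Require Import all_boot all_order all_algebra.
From mathcomp Require Import fraction.
Set Implicit Arguments. Unset Strict Implicit. Unset Printing Implicit Defensive.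
Import Order.TTheory GRing.Theory Num.Theory.
Local Open Scope ring_scope.

Definition qpoch {R : comNzRingType} (a q : R) (n : nat) : R :=
  \prod_(k < n) (1 - a * q ^+ k).

Definition S {F : fieldType} (q : F) (m i : nat) : F :=
  \sum_(j < m.+1) q ^+ (i * j) * qpoch q q (m + j) / qpoch (q ^+ 2) (q ^+ 2) j.

Definition ratfun := {fraction {poly rat}}.
Definition qX : ratfun := tofrac ('X : {poly rat}).

(* Main.v *)
Require Import Defs.
From HB Require Import structures.
From mathcomp Require Import all_boot all_order all_algebra.
From mathcomp Require Import fraction.
From mathcomp Require Import ring.
Local Open Scope ring_scope.
Import GRing.Theory.

Lemma qpochS (F : comNzRingType) (a q : F) m :
  qpoch a q m.+1 = qpoch a q m * (1 - a * q ^+ m).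
Proof. by rewrite /qpoch big_ord_recr. Qed.

Lemma qpoch_double (F : comNzRingType) (q : F) n :
  qpoch q q (n + n) = qpoch q (q ^+ 2) n * qpoch (q ^+ 2) (q ^+ 2) n.
Proof.
elim: n => [|n IH]; first by rewrite /qpoch !big_ord0 mulr1.
rewrite addnS addSn !qpochS IH [q ^+ (n+n).+1]exprS -!exprM mul2n -addnn.
ring.
Qed.

Lemma qX_pow_neq1 k : (0 < k)%N -> qX ^+ k != 1.
Proof.
move=> k0; rewrite /qX -tofracXn -tofrac1 tofrac_eq.
apply/eqP => /(congr1 (fun p : {poly rat} => size p)).
by rewrite size_polyXn size_poly1; case: k k0.
Qed.

Lemma D_neq0 n : qpoch (qX ^+ 2) (qX ^+ 2) n != 0.
Proof.
rewrite /qpoch; apply/prodf_neq0 => k _.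
rewrite subr_eq0 eq_sym -exprM -exprD; exact: qX_pow_neq1.
Qed.

Theorem lemma3p1 (n i : nat) : (1 <= n)%N ->
  S qX n i = S qX n.-1 i - qX ^+ n * S qX n.-1 i.+1
             + qX ^+ (i * n) * qpoch qX (qX ^+ 2) n.
Proof.
case: n => [//|m] _ /=.
rewrite /S big_ord_recr /= mulr_sumr -sumrB; congr (_ + _).
  apply: eq_bigr => j _.
  rewrite addSn qpochS.
  have e1 : qX * qX ^+ (m + j) = qX ^+ m.+1 * qX ^+ j by rewrite -exprS -exprD addSn.
  have e2 : qX ^+ (i.+1 * j) = qX ^+ j * qX ^+ (i * j) by rewrite mulSn exprD.
  rewrite e1 e2.
  ring.
rewrite qpoch_double mulrA mulfK ?D_neq0 //.
Qed.
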